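(* Let $B$ be a nilpotent finite-dimensional Leibniz algebra over a field with $\dim B\ge 2$ and $\dim R_1(B)=1$, where $R_1(B)=\{r\in B: Br=0\}$. Then there is no finite-dimensional Leibniz algebra $A$ in which $B$ is an ideal and $B\subseteq\Phi(A)$.
   Context: A (left) Leibniz algebra is an algebra satisfying $x(yz)=(xy)z+y(xz)$ for all $x,y,z$. Nilpotent means $B^t=0$ for some $t$, where $B^1=B$, $B^{j+1}=BB^j$. An ideal is a subspace $I$ with $AI\subseteq I$ and $IA\subseteq I$. $\Phi(A)$, the Frattini subalgebra, is the intersection of all maximal subalgebras of $A$. *)

(* Defs.v *)
From HB Require Import structures.
From mathcomp Require Import all_boot all_order all_algebra.
Set Implicit Arguments. Unset Strict Implicit. Unset Printing Implicit Defensive.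
Import Order.TTheory GRing.Theory.
Local Open Scope ring_scope.

Section LeibnizDefs.
Variables (F : fieldType) (V : vectType F) (mul : V -> V -> V).

Definition bilinear_mul : Prop :=
  (forall (a : F) (u v w : V), mul (a *: u + v) w = a *: mul u w + mul v w) /\
  (forall (a : F) (u v w : V), mul w (a *: u + v) = a *: mul w u + mul w v).

Definition leibniz : Prop :=
  forall x y z : V, mul x (mul y z) = mul (mul x y) z + mul y (mul x z).

(* product UW of subspaces: span of all products u w (bilinearity makes
   spanning by basis products correct) *)
Definition prodv (U W : {vspace V}) : {vspace V} :=
  <<[seq mul u w | u <- vbasis U, w <- vbasis W]>>%VS.

(* lower powers: lpow B n = B^(n+1), i.e. B^1 = B, B^(j+1) = B B^j *)
Fixpoint lpow (B : {vspace V}) (n : nat) : {vspace V} :=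
  match n with
  | 0 => B
  | k.+1 => prodv B (lpow B k)
  end.

Definition nilpotent_sub (B : {vspace V}) : Prop :=
  exists n : nat, lpow B n = 0%VS.

Definition R1 (B : {vspace V}) : {vspace V} :=
  (B :&: \bigcap_(b <- vbasis B) lker (linfun (mul b)))%VS.

Definition subalgebra (M : {vspace V}) : Prop :=
  forall x y, x \in M -> y \in M -> mul x y \in M.

Definition ideal (I : {vspace V}) : Prop :=
  forall x y, x \in I -> mul x y \in I /\ mul y x \in I.

Definition maximal_subalgebra (M : {vspace V}) : Prop :=
  [/\ subalgebra M, M != fullv &
      forall N : {vspace V}, subalgebra N -> (M <= N)%VS ->
        N = M \/ N = fullv].

(* x belongs to Phi(A), the intersection of all maximal subalgebras
   (empty intersection = A) *)
Definition in_frattini (x : V) : Prop :=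
  forall M : {vspace V}, maximal_subalgebra M -> x \in M.

End LeibnizDefs.

(* Main.v *)
Require Import Defs.
From HB Require Import structures.
From mathcomp Require Import all_boot all_order all_algebra zify.
From Stdlib Require Import Classical_Prop Classical_Pred_Type.
Set Implicit Arguments. Unset Strict Implicit. Unset Printing Implicit Defensive.
Import Order.TTheory GRing.Theory.
Local Open Scope ring_scope.

Section L.
Variables (F : fieldType) (V : vectType F) (mul : V -> V -> V).
Hypothesis bil : bilinear_mul mul.

Lemma mulDl u v w : mul (u + v) w = mul u w + mul v w.
Proof. by have := (proj1 bil) 1 u v w; rewrite !scale1r. Qed.
Lemma mulDr u v w : mul w (u + v) = mul w u + mul w v.
Proof. by have := (proj2 bil) 1 u v w; rewrite !scale1r. Qed.
Lemma mul0l w : mul 0 w = 0.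
Proof. by apply: (addrI (mul 0 w)); rewrite -mulDl !addr0. Qed.
Lemma mul0r w : mul w 0 = 0.
Proof. by apply: (addrI (mul w 0)); rewrite -mulDr !addr0. Qed.
Lemma mulZl a u w : mul (a *: u) w = a *: mul u w.
Proof. by have := (proj1 bil) a u 0 w; rewrite !addr0 mul0l addr0. Qed.
Lemma mulZr a u w : mul w (a *: u) = a *: mul w u.
Proof. by have := (proj2 bil) a u 0 w; rewrite !addr0 mul0r addr0. Qed.
Lemma mulNl u w : mul (- u) w = - mul u w.
Proof. by rewrite -scaleN1r mulZl scaleN1r. Qed.
Lemma mulNr u w : mul w (- u) = - mul w u.
Proof. by rewrite -scaleN1r mulZr scaleN1r. Qed.
Lemma mulBl u v w : mul (u - v) w = mul u w - mul v w.
Proof. by rewrite mulDl mulNl. Qed.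
Lemma mulBr u v w : mul w (u - v) = mul w u - mul w v.
Proof. by rewrite mulDr mulNr. Qed.
Lemma mul_suml (I : Type) (r : seq I) (P : pred I) (f : I -> V) w :
  mul (\sum_(i <- r | P i) f i) w = \sum_(i <- r | P i) mul (f i) w.
Proof.
elim/big_rec2: _ => [|i x y _ <-]; first exact: mul0l.
by rewrite mulDl.
Qed.
Lemma mul_sumr (I : Type) (r : seq I) (P : pred I) (f : I -> V) w :
  mul w (\sum_(i <- r | P i) f i) = \sum_(i <- r | P i) mul w (f i).
Proof.
elim/big_rec2: _ => [|i x y _ <-]; first exact: mul0r.
by rewrite mulDr.
Qed.

Definition lmul (b : V) := fun x => mul b x.
Fact lmul_lin b : linear (lmul b).
Proof. by move=> a u v; rewrite /lmul mulDr mulZr. Qed.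
HB.instance Definition _ b := GRing.isLinear.Build F V V *:%R (lmul b) (lmul_lin b).

Definition rmul (b : V) := fun x => mul x b.
Fact rmul_lin b : linear (rmul b).
Proof. by move=> a u v; rewrite /rmul mulDl mulZl. Qed.
HB.instance Definition _ b := GRing.isLinear.Build F V V *:%R (rmul b) (rmul_lin b).

Lemma linfun_mul b x : linfun (mul b) x = mul b x.
Proof. by rewrite (_ : linfun (mul b) = linfun (lmul b)) // lfunE. Qed.

Lemma memv_bigcap_seq (I : eqType) (s : seq I) (U : I -> {vspace V}) x :
  (x \in \bigcap_(i <- s) U i)%VS <-> (forall i, i \in s -> x \in U i).
Proof.
elim: s => [|i s IH]; first by rewrite big_nil; split => // _; exact: memvf.
rewrite big_cons memv_cap; split.
  by move=> /andP[h1 /IH h2] j; rewrite inE => /orP[/eqP->|/h2].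
move=> h; rewrite h ?mem_head //=.
by apply/IH => j hj; apply: h; rewrite inE hj orbT.
Qed.

Lemma lin_basis (f : {linear V -> V}) (U X : {vspace V}) v :
  (forall u, u \in vbasis U -> f u \in X) -> v \in U -> f v \in X.
Proof.
move=> h vU; rewrite (coord_vbasis vU) linear_sum; apply: rpred_sum => i _.
by rewrite linearZ; apply: rpredZ; apply: h; apply: mem_nth; rewrite size_tuple.
Qed.

Lemma memR1 (B : {vspace V}) r : r \in R1 mul B <-> r \in B /\ forall b, b \in B -> mul b r = 0.
Proof.
rewrite /R1 memv_cap; split.
  move=> /andP[rB /memv_bigcap_seq h]; split => // b bB.
  apply/eqP; rewrite -memv0.
  apply: (@lin_basis (rmul r : {linear V -> V}) B) bB => u /h.
  by rewrite memv_ker linfun_mul memv0.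
move=> [rB h]; rewrite rB /=; apply/memv_bigcap_seq => b /vbasis_mem bB.
by rewrite memv_ker linfun_mul h.
Qed.

Lemma mul_prodv (U W : {vspace V}) x y : x \in U -> y \in W -> mul x y \in prodv mul U W.
Proof.
move=> xU yW.
apply: (@lin_basis (rmul y : {linear V -> V}) U) xU => u uU.
apply: (@lin_basis (lmul u : {linear V -> V}) W) yW => w wW.
by apply: memv_span; apply/allpairsP; exists (u, w).
Qed.

Lemma prodv_sub (U W X : {vspace V}) :
  (forall x y, x \in U -> y \in W -> mul x y \in X) -> (prodv mul U W <= X)%VS.
Proof.
move=> h; apply/span_subvP => v /allpairsP[[u w] /= [uU wW ->]].
by apply: h; apply: vbasis_mem.
Qed.


Section Core.
Variables (B : {vspace V}) (m : nat) (w : m.-tuple V) (z : V).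
Hypothesis nz : z != 0.
Hypothesis hz : forall b, b \in B -> forall i : 'I_m, mul b w`_i \in <[z]>%VS.
Hypothesis nd : forall x : 'I_m -> F,
  (forall b, b \in B -> mul b (\sum_i x i *: w`_i) = 0) -> forall i, x i = 0.

Let sig := coord [tuple z] ord0.

Lemma sigK v : v \in <[z]>%VS -> v = sig v *: z.
Proof.
move=> /vlineP[k ->]; rewrite /sig linearZ /=.
have := @coord_free _ _ 1 [tuple z] ord0 ord0; rewrite seq1_free nz => /(_ isT).
by rewrite /= => ->; rewrite mulr1.
Qed.

Lemma core (c : 'I_m -> F) : exists2 b, b \in B & forall i : 'I_m, mul b w`_i = c i *: z.
Proof.
pose beta := vbasis B.
have betaB (j : 'I_(\dim B)) : beta`_j \in B.
  by apply: vbasis_mem; apply: mem_nth; rewrite size_tuple.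
pose M := \matrix_(j < \dim B, i < m) sig (mul beta`_j w`_i).
have rf : row_free M^T.
  apply: inj_row_free => v vM.
  pose s := \sum_i v 0 i *: w`_i.
  have hs (j : 'I_(\dim B)) : mul beta`_j s = 0.
    have hin : mul beta`_j s \in <[z]>%VS.
      rewrite /s mul_sumr; apply: rpred_sum => i _; rewrite mulZr.
      by apply: rpredZ; apply: hz.
    rewrite (sigK hin).
    have e : sig (mul beta`_j s) = (v *m M^T) 0 j.
      rewrite !mxE /s /sig mul_sumr linear_sum /=; apply: eq_bigr => i _.
      by rewrite !mxE mulZr linearZ.
    by rewrite e vM mxE scale0r.
  have hsB b : b \in B -> mul b s = 0.
    move=> bB; apply/eqP; rewrite -memv0.
    apply: (@lin_basis (rmul s : {linear V -> V}) B) bB => u.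
    move=> /(nthP 0)[j]; rewrite size_tuple => jlt <-.
    by rewrite memv0 /rmul; apply/eqP; exact: (hs (Ordinal jlt)).
  have := nd hsB => h0.
  by apply/rowP => i; rewrite mxE h0.
have rM : row_full M by rewrite /row_full -mxrank_tr; exact: rf.
have /submxP[D yD] := submx_full (\row_i c i) rM.
exists (\sum_j D 0 j *: beta`_j).
  by apply: rpred_sum => j _; apply: rpredZ.
move=> i.
have hin : mul (\sum_j D 0 j *: beta`_j) w`_i \in <[z]>%VS.
  by apply: hz; apply: rpred_sum => j _; apply: rpredZ.
rewrite (sigK hin); congr (_ *: _).
have := congr1 (fun A : 'M[F]_(1, m) => A 0 i) yD; rewrite !mxE => ->.
rewrite /sig mul_suml linear_sum /=; apply: eq_bigr => k _.
by rewrite mulZl linearZ /= !mxE.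
Qed.
End Core.


Lemma exists_max (N : {vspace V}) : subalgebra mul N -> N != fullv ->
  exists M, maximal_subalgebra mul M /\ (N <= M)%VS.
Proof.
move: {-1}(\dim {:V} - \dim N)%N (leqnn (\dim {:V} - \dim N)%N) => k.
elim: k N => [|k IH] N hk sN nN.
  exfalso; move: nN; rewrite eqEdim subvf /=; move: hk; rewrite leqn0 subn_eq0.
  by move=> ->.
case: (classic (maximal_subalgebra mul N)) => [mN|nmN]; first by exists N.
have [N' hN'] : exists N', ~ (subalgebra mul N' -> (N <= N')%VS -> N' = N \/ N' = fullv).
  apply: not_all_ex_not => h; apply: nmN; split => //.
have [sN' [NN' [nNN' nN'f]]] : [/\ subalgebra mul N', (N <= N')%VS & N' <> N /\ N' <> fullv].
  case: (classic (subalgebra mul N')) => s'; last by exfalso; apply: hN'.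
  case: (classic (N <= N')%VS) => i'; last by exfalso; apply: hN' => _ h; exfalso; exact: i' h.
  split => //; split => e; apply: hN' => _ _; by [left|right].
have lt : (\dim N < \dim N')%N.
  rewrite ltn_neqAle dimvS // andbT.
  apply/negP => /eqP e; apply: nNN'; apply/eqP; rewrite eq_sym eqEdim NN' /=.
  by rewrite e.
have [M [mM N'M]] : exists M, maximal_subalgebra mul M /\ (N' <= M)%VS.
  apply: IH => //; last by apply/eqP.
  have := dimvS (subvf N'); move: hk; lia.
by exists M; split => //; apply: subv_trans N'M.
Qed.


Section Main.
Variable B : {vspace V}.
Hypotheses (leib : leibniz mul) (idl : ideal mul B) (nil : nilpotent_sub mul B)
  (dim2 : (2 <= \dim B)%N) (dim1 : \dim (R1 mul B) = 1%N)
  (fratt : forall x, x \in B -> in_frattini mul x).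

Let z := vpick (R1 mul B).

Lemma z_neq0 : z != 0.
Proof. by rewrite /z vpick0 -dimv_eq0 dim1. Qed.

Lemma Zz : R1 mul B = <[z]>%VS.
Proof.
apply/eqP; rewrite eq_sym eqEdim -memvE memv_pick /= dim1 dim_vline z_neq0.
by [].
Qed.

Lemma memZ v : v \in <[z]>%VS <-> v \in B /\ forall b, b \in B -> mul b v = 0.
Proof. by rewrite -Zz; apply: memR1. Qed.

Lemma mulBA b a : b \in B -> mul b a \in B /\ mul a b \in B.
Proof. exact: idl. Qed.

Lemma AZ a v : v \in <[z]>%VS -> mul a v \in <[z]>%VS.
Proof.
move=> /memZ[vB h]; apply/memZ; split; first by case: (mulBA a vB).
move=> b bB; rewrite leib (h b bB) (h (mul b a)) ?mul0l ?mul0r ?addr0 //.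
by case: (mulBA a bB).
Qed.

Definition B1 := (B :&: \bigcap_(b <- vbasis B) ((linfun (mul b)) @^-1: <[z]>))%VS.

Lemma memB1 v : v \in B1 <-> v \in B /\ forall b, b \in B -> mul b v \in <[z]>%VS.
Proof.
rewrite /B1 memv_cap; split.
  move=> /andP[vB /memv_bigcap_seq h]; split => // b bB.
  apply: (@lin_basis (rmul v : {linear V -> V}) B) bB => u /h.
  by rewrite -memv_preim linfun_mul.
move=> [vB h]; rewrite vB /=; apply/memv_bigcap_seq => b /vbasis_mem bB.
by rewrite -memv_preim linfun_mul h.
Qed.

Lemma AB1 a v : v \in B1 -> mul a v \in B1.
Proof.
move=> /memB1[vB h]; apply/memB1; split; first by case: (mulBA a vB).
move=> b bB; rewrite leib; apply: rpredD.
  by apply: h; case: (mulBA a bB).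
by apply: AZ; apply: h.
Qed.

Lemma lpow_sub n : (lpow mul B n <= B)%VS.
Proof.
case: n => [|n] /=; first exact: subvv.
by apply: prodv_sub => x y xB _; case: (mulBA y xB).
Qed.

Lemma B1_big : ~ (B1 <= <[z]>)%VS.
Proof.
move=> sub.
case: nil => n0 hn0.
have ex : exists n, lpow mul B n == 0%VS by exists n0; apply/eqP.
case: (ex_minnP ex) => t /eqP ht tmin.
case: t ht tmin => [|s] ht tmin.
  by move: dim2; rewrite /= in ht; rewrite ht dimv0.
have hs : lpow mul B s != 0%VS.
  by apply/negP => /tmin; rewrite ltnn.
have sR : (lpow mul B s <= <[z]>)%VS.
  apply/subvP => x xs; apply/memZ; split; first exact: (subvP (lpow_sub s)).
  move=> b bB; apply/eqP; rewrite -memv0 -ht /=.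
  exact: mul_prodv.
have eqs : lpow mul B s = <[z]>%VS.
  apply/eqP; rewrite eqEdim sR dim_vline z_neq0 /=.
  by rewrite lt0n dimv_eq0.
case: s hs sR eqs {ht tmin} => [|r] hs sR eqs.
  by move: dim2; rewrite /= in eqs; rewrite eqs dim_vline z_neq0.
have PB1 : (lpow mul B r <= B1)%VS.
  apply/subvP => p pr; apply/memB1; split; first exact: (subvP (lpow_sub r)).
  by move=> b bB; rewrite -eqs /=; apply: mul_prodv.
have : (lpow mul B r.+1 <= 0)%VS.
  rewrite /=; apply: prodv_sub => x y xB yr.
  have /memZ[_ h] : y \in <[z]>%VS by apply: (subvP sub); apply: (subvP PB1).
  by rewrite h // mem0v.
by rewrite subv0 eqs -dimv_eq0 dim_vline z_neq0.
Qed.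

Definition W := (B1 :\: <[z]>)%VS.

Lemma WB1 : (W <= B1)%VS. Proof. exact: diffvSl. Qed.

Lemma zB1 : (<[z]> <= B1)%VS.
Proof.
rewrite -memvE; apply/memB1; have /memZ[zB h] := memv_line z; split => //.
by move=> b bB; rewrite h // mem0v.
Qed.

Lemma WZ : (W + <[z]>)%VS = B1.
Proof. by rewrite /W -{2}(addv_diff_cap B1 <[z]>) (capv_idPr zB1). Qed.

Lemma Wcap v : v \in W -> v \in <[z]>%VS -> v = 0.
Proof.
by move=> h1 h2; apply/eqP; rewrite -memv0 -(capv_diff B1 <[z]>) memv_cap h1.
Qed.

Lemma W_neq0 : W != 0%VS.
Proof.
apply/negP => /eqP W0; apply: B1_big; by rewrite -WZ W0 add0v.
Qed.

Definition C := (\bigcap_(u <- vbasis W) ((linfun (rmul u)) @^-1: W))%VS.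

Lemma memC a : a \in C <-> forall y, y \in W -> mul a y \in W.
Proof.
split.
  move=> /memv_bigcap_seq h y yW.
  apply: (@lin_basis (lmul a : {linear V -> V}) W) yW => u /h.
  by rewrite -memv_preim lfunE.
move=> h; apply/memv_bigcap_seq => u /vbasis_mem uW.
by rewrite -memv_preim lfunE /= /rmul h.
Qed.

Lemma C_sub : subalgebra mul C.
Proof.
move=> a a' /memC ha /memC ha'; apply/memC => y yW.
have e : mul (mul a a') y = mul a (mul a' y) - mul a' (mul a y).
  by rewrite leib addrK.
by rewrite e; apply: rpredB; [apply: ha; apply: ha' | apply: ha'; apply: ha].
Qed.

Let w := vbasis W.

Lemma wW (i : 'I_(\dim W)) : w`_i \in W.
Proof. by apply: vbasis_mem; apply: mem_nth; rewrite size_tuple. Qed.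

Lemma core_app (c : 'I_(\dim W) -> F) :
  exists2 b, b \in B & forall i : 'I_(\dim W), mul b w`_i = c i *: z.
Proof.
apply: core => //; first exact: z_neq0.
  move=> b bB i; have /memB1[_ h] := subvP WB1 _ (wW i); exact: h.
move=> x hx.
have sW : \sum_i x i *: w`_i \in W by apply: rpred_sum => i _; apply: rpredZ; apply: wW.
have sZ : \sum_i x i *: w`_i \in <[z]>%VS.
  apply/memZ; split => //.
  by have /memB1[] := subvP WB1 _ sW.
have := Wcap sW sZ.
by move/freeP: (basis_free (vbasisP W)); apply.
Qed.

Lemma main_false : False.
Proof.
have nC : C != fullv.
  have [i0] : exists i : 'I_(\dim W), True.
    have : (0 < \dim W)%N by rewrite lt0n dimv_eq0 W_neq0.
    by case: (\dim W) => // n _; exists ord0.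
  move=> _; have [b bB hb] := core_app (fun _ => 1).
  apply/negP => /eqP Cf.
  have : b \in C by rewrite Cf memvf.
  move=> /memC /(_ _ (wW i0)); rewrite hb scale1r => zW.
  by move: z_neq0; rewrite (Wcap zW (memv_line z)) eqxx.
have [M [mM CM]] := exists_max C_sub nC; case: (mM) => sM nM maxM.
apply/negP: nM; rewrite negbK eqEdim subvf /=; apply: dimvS.
apply/subvP => a _.
have dec : forall i : 'I_(\dim W), exists c, mul a w`_i - c *: z \in W.
  move=> i; have : mul a w`_i \in B1 by apply: AB1; apply: (subvP WB1); apply: wW.
  rewrite -WZ => /memv_addP[u uW [v /vlineP[c ->] ->]].
  by exists c; rewrite addrK.
have [c hc] := fin_all_exists dec.
have [b bB hb] := core_app c.
have hab : a - b \in C.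
  apply/memC => y yW.
  apply: (@lin_basis (lmul (a - b) : {linear V -> V}) W) yW => u.
  move=> /(nthP 0)[j]; rewrite size_tuple => jlt <-.
  change (mul (a - b) w`_j \in W); rewrite mulBl.
  have := hb (Ordinal jlt); rewrite /= => ->.
  exact: (hc (Ordinal jlt)).
have bM : b \in M := fratt bB mM.
rewrite -(subrK b a); apply: rpredD => //.
exact: (subvP CM).
Qed.
End Main.
End L.

Theorem mainTheorem16 (F : fieldType) (V : vectType F) (mul : V -> V -> V)
  (B : {vspace V}) :
  bilinear_mul mul -> leibniz mul ->
  ideal mul B -> nilpotent_sub mul B ->
  (2 <= \dim B)%N -> \dim (R1 mul B) = 1%N ->
  ~ (forall x, x \in B -> in_frattini mul x).
Proof.
move=> bil leib idl nil d2 d1 fr.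
exact: (@main_false F V mul bil B leib idl nil d2 d1 fr).
Qed.
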